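(* Let $(A,+,\circ)$ be a finite left brace whose additive group $(A,+)$ is cyclic, let $X$ be a transitive cycle base of $A$ and let $g\in X$. Then $g$ generates the additive group $(A,+)$.
   Context: A left brace is a set $A$ with two operations such that $(A,+)$ is an abelian group, $(A,\circ)$ is a group, and $a\circ(b+c)=a\circ b-a+a\circ c$ for all $a,b,c$. For $a\in A$, $\lambda_a(b):=-a+a\circ b$; $a\mapsto\lambda_a$ is a homomorphism $(A,\circ)\to\mathrm{Aut}(A,+)$, giving an action of $(A,\circ)$ on $A$. A transitive cycle base is a subset of $A$ which is a single orbit of this action and which generates $(A,+)$. *)

(* Defs.v *)
From mathcomp Require Import all_boot all_order all_algebra.
Set Implicit Arguments. Unset Strict Implicit. Unset Printing Implicit Defensive.
Import GRing.Theory.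
Local Open Scope ring_scope.

Definition is_left_brace (A : finZmodType) (circ : A -> A -> A) : Prop :=
  [/\ (forall a b c, circ a (circ b c) = circ (circ a b) c),
      (exists e, (forall a, circ e a = a /\ circ a e = a) /\
                 (forall a, exists b, circ a b = e /\ circ b a = e))
    & (forall a b c, circ a (b + c) = circ a b - a + circ a c)].

Definition brace_lambda (A : finZmodType) (circ : A -> A -> A) (a b : A) : A :=
  - a + circ a b.

Definition add_generates (A : finZmodType) (X : {set A}) : Prop :=
  forall y : A, exists c : A -> int, y = \sum_(x in X) (x *~ c x).

Definition add_cyclic (A : finZmodType) : Prop :=
  exists a : A, add_generates [set a].

Definition lambda_orbit (A : finZmodType) (circ : A -> A -> A) (X : {set A}) : Prop :=
  exists x : A, X = [set brace_lambda circ a x | a in A].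

Definition transitive_cycle_base (A : finZmodType) (circ : A -> A -> A)
  (X : {set A}) : Prop :=
  lambda_orbit circ X /\ add_generates X.

(* Main.v *)
Require Import Defs.
From mathcomp Require Import all_boot all_order all_algebra.
Import GRing.Theory.
Local Open Scope ring_scope.

Lemma add_mulz (A : finZmodType) (f : A -> A) :
  (forall u v, f (u + v) = f u + f v) -> forall z (m : int), f (z *~ m) = f z *~ m.
Proof.
move=> fD.
have f0 : f 0 = 0.
  by have := fD 0 0; rewrite addr0 => H; apply: (addrI (f 0)); rewrite -H addr0.
have fN : forall u, f (- u) = - f u.
  by move=> u; apply/eqP; rewrite -subr_eq0 opprK -fD addNr f0.
have fn : forall z n, f (z *+ n) = f z *+ n.
  by move=> z; elim=> [|n IH]; rewrite ?mulr0n // !mulrS fD IH.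
move=> z [n|n]; first exact: fn.
by rewrite NegzE !mulrNz fN -!pmulrn fn.
Qed.

Lemma cyc_end (A : finZmodType) (c : A) (f : A -> A) :
  add_generates [set c] -> (forall u v, f (u + v) = f u + f v) ->
  exists k : int, forall z, f z = z *~ k.
Proof.
move=> gen fD.
have [k0 Hk0] : exists k : int, f c = c *~ k.
  have [d ->] := gen (f c); rewrite big_set1; by exists (d c).
exists k0 => z; have [d ->] := gen z; rewrite big_set1.
by rewrite add_mulz // Hk0 mulrzAC.
Qed.

Theorem mainTheorem2 (A : finZmodType) (circ : A -> A -> A) (X : {set A}) (g : A) :
  is_left_brace circ -> add_cyclic A -> transitive_cycle_base circ X ->
  g \in X -> add_generates [set g].
Proof.
move=> [cA [e [He Hinv]] cD] [c gc] [[x HX] genX] gX.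
have lD : forall a u v, brace_lambda circ a (u + v) =
    brace_lambda circ a u + brace_lambda circ a v.
  move=> a u v; rewrite /brace_lambda cD.
  by rewrite addrA addrA (addrC (-a)) addrA.
have linj : forall a, injective (brace_lambda circ a).
  move=> a u v; rewrite /brace_lambda => /addrI H.
  have [b [_ Hba]] := Hinv a.
  by rewrite -(proj1 (He u)) -(proj1 (He v)) -Hba -!cA H.
move: gX; rewrite HX => /imsetP [a0 _ ->].
have [psi K1 K2] := injF_bij (linj a0).
have psiD : forall u v, psi (u + v) = psi u + psi v.
  move=> u v; apply: (linj a0); by rewrite lD !K2.
have [k' Hk'] := @cyc_end _ c _ gc psiD.
set g0 := brace_lambda circ a0 x.
have inX : forall y, y \in X -> exists m : int, y = g0 *~ m.
  move=> y; rewrite HX => /imsetP [b _ ->].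
  have [kb Hkb] := @cyc_end _ c _ gc (lD b).
  have xg : x = g0 *~ k' by rewrite -Hk' /g0 K1.
  by exists (k' * kb); rewrite Hkb xg mulrzA.
move=> z; have [d ->] := genX z.
have : exists m : int, \sum_(y in X) y *~ d y = g0 *~ m.
  apply: (big_ind (fun w => exists m : int, w = g0 *~ m)).
  - by exists 0; rewrite mulr0z.
  - by move=> u w [m1 ->] [m2 ->]; exists (m1 + m2); rewrite mulrzDr.
  - move=> y Hy; have [m Hm] := inX y Hy; exists (m * d y); by rewrite {1}Hm mulrzA.
move=> [m ->]; exists (fun _ => m); by rewrite big_set1.
Qed.
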